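(* Let $\Bbbk$ be an algebraically closed field and $A$ a semisimple $\Bbbk$-algebra, so that $A\cong M_{n_1}(\Bbbk)\times\cdots\times M_{n_r}(\Bbbk)$ by the Artin–Wedderburn theorem. Then $\operatorname{Frobdim}(A)=\sum_{i=1}^r n_i^2$.
   Context: A nearly Frobenius coproduct on a $\Bbbk$-algebra $A$ is a $\Bbbk$-linear map $\Delta:A\to A\otimes_\Bbbk A$ that is an $A$-bimodule morphism, i.e. $\Delta(ab)=(a\otimes 1)\Delta(b)=\Delta(a)(1\otimes b)$ for all $a,b\in A$. The Frobenius space of $A$ is the vector space of all such coproducts, and $\operatorname{Frobdim}A$ is its dimension over $\Bbbk$. *)

(* Defs.v *)
From HB Require Import structures.
From mathcomp Require Import all_boot all_algebra all_field.
Set Implicit Arguments. Unset Strict Implicit. Unset Printing Implicit Defensive.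
Import GRing.Theory.
Local Open Scope ring_scope.

(* Semisimple: zero Jacobson radical.  For a finite-dimensional algebra,
   x lies in the Jacobson radical iff a * x is nilpotent for every a. *)
Definition semisimple (F : fieldType) (A : falgType F) : Prop :=
  forall x : A, (forall a : A, exists m : nat, (a * x) ^+ m = 0) -> x = 0.

Definition fdim (F : fieldType) (A : falgType F) : nat := \dim (fullv : {vspace A}).
Definition fbasis (F : fieldType) (A : falgType F) : (fdim A).-tuple A :=
  vbasis (fullv : {vspace A}).

(* Model of A (x) A: a matrix T : 'M_(d,d) represents
   \sum_(i,j) T i j (e_i (x) e_j), where e = fbasis A. *)
Definition tens (F : fieldType) (A : falgType F) := 'M[F]_(fdim A, fdim A).

(* Matrix of left multiplication by a, so that (a (x) 1) T = lmx a *m T. *)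
Definition lmx (F : fieldType) (A : falgType F) (a : A) : 'M[F]_(fdim A) :=
  \matrix_(k, i) coord (fbasis A) k (a * tnth (fbasis A) i).
(* Matrix of right multiplication by b, so that T (1 (x) b) = T *m rmx b. *)
Definition rmx (F : fieldType) (A : falgType F) (b : A) : 'M[F]_(fdim A) :=
  \matrix_(j, l) coord (fbasis A) l (tnth (fbasis A) j * b).

Definition nearly_frobenius (F : fieldType) (A : falgType F)
    (D : 'Hom(A, tens A)) : Prop :=
  forall a b : A, D (a * b) = lmx a *m D b /\ D (a * b) = D a *m rmx b.

Definition wedderburn_iso (F : fieldType) (A : falgType F) (r : nat)
    (n : 'I_r -> nat) (phi : forall i : 'I_r, A -> 'M[F]_(n i)) : Prop :=
  [/\ forall i, forall (c : F) (a b : A), phi i (c *: a + b) = c *: phi i a + phi i b,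
      forall i, forall a b : A, phi i (a * b) = phi i a *m phi i b,
      forall i, phi i 1 = 1%:M,
      forall a : A, (forall i, phi i a = 0) -> a = 0
    & forall M : (forall i : 'I_r, 'M[F]_(n i)), exists a : A, forall i, phi i a = M i].

(* Main.v *)
Require Import Defs.
From HB Require Import structures.
From mathcomp Require Import all_boot all_algebra all_field.
Import GRing.Theory.
Local Open Scope ring_scope.
Set Implicit Arguments. Unset Strict Implicit. Unset Printing Implicit Defensive.


Section Tens.
Variables (F : fieldType) (A : falgType F).
Local Notation d := (fdim A).
Local Notation e := (fbasis A).
Local Notation eb k := (tnth (fbasis A) k).

Lemma free_e : free e.
Proof. exact: basis_free (vbasisP fullv). Qed.

Lemma coord_e (k j : 'I_d) : coord e k (eb j) = (j == k)%:R.
Proof. by rewrite (tnth_nth 0) coord_free // free_e. Qed.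

Lemma expand_e (v : A) : v = \sum_k coord e k v *: eb k.
Proof.
rewrite {1}(coord_vbasis (memvf v)); apply: eq_bigr => k _.
by rewrite (tnth_nth 0).
Qed.

Lemma lmxM (a b : A) : lmx (a * b) = lmx a *m lmx b.
Proof.
apply/matrixP => k i; rewrite !mxE -mulrA.
rewrite {1}(expand_e (b * tnth e i)) mulr_sumr linear_sum /=.
apply: eq_bigr => j _; rewrite !mxE -scalerAr linearZ /= mulrC.
by [].
Qed.

Lemma rmxM (a b : A) : rmx (a * b) = rmx a *m rmx b.
Proof.
apply/matrixP => i l; rewrite !mxE mulrA.
rewrite {1}(expand_e (tnth e i * a)) mulr_suml linear_sum /=.
apply: eq_bigr => j _; rewrite !mxE -scalerAl linearZ /=.
by [].
Qed.

Lemma lmx1 : lmx (1 : A) = 1%:M.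
Proof. by apply/matrixP => k i; rewrite !mxE mul1r coord_e eq_sym. Qed.

Lemma lmx_lin (c : F) (a b : A) : lmx (c *: a + b) = c *: lmx a + lmx b.
Proof.
by apply/matrixP => k i; rewrite !mxE mulrDl -scalerAl linearD linearZ.
Qed.

Definition tp (x y : A) : 'M[F]_d := \matrix_(k, l) (coord e k x * coord e l y).

Lemma tpL (a x y : A) : lmx a *m tp x y = tp (a * x) y.
Proof.
apply/matrixP => k l; rewrite !mxE.
rewrite {2}(expand_e x) mulr_sumr linear_sum /= mulr_suml.
apply: eq_bigr => i _; rewrite !mxE -scalerAr linearZ /=.
by rewrite mulrA [coord e k _ * _]mulrC.
Qed.

Lemma tpR (b x y : A) : tp x y *m rmx b = tp x (y * b).
Proof.
apply/matrixP => k l; rewrite !mxE.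
rewrite {2}(expand_e y) mulr_suml linear_sum /= mulr_sumr.
apply: eq_bigr => i _; rewrite !mxE -scalerAl linearZ /=.
by rewrite mulrA.
Qed.

Lemma tp_suml (I : finType) (c : I -> F) (x : I -> A) (y : A) :
  tp (\sum_i c i *: x i) y = \sum_i c i *: tp (x i) y.
Proof.
apply/matrixP => k l; rewrite !mxE summxE linear_sum /= mulr_suml.
by apply: eq_bigr => i _; rewrite !mxE linearZ /= mulrA.
Qed.

Lemma tp_sumr (I : finType) (c : I -> F) (x : A) (y : I -> A) :
  tp x (\sum_i c i *: y i) = \sum_i c i *: tp x (y i).
Proof.
apply/matrixP => k l; rewrite !mxE summxE linear_sum /= mulr_sumr.
by apply: eq_bigr => i _; rewrite !mxE linearZ /= mulrCA.
Qed.

Lemma tp_e (k l : 'I_d) : tp (eb k) (eb l) = delta_mx k l.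
Proof. by apply/matrixP => i j; rewrite !mxE !coord_e ![_ == i]eq_sym ![_ == j]eq_sym -natrM mulnb. Qed.

Lemma tp_decomp (S : 'M[F]_d) : S = \sum_k \sum_l S k l *: tp (eb k) (eb l).
Proof.
rewrite {1}(matrix_sum_delta S); apply: eq_bigr => k _; apply: eq_bigr => l _.
by rewrite tp_e.
Qed.
End Tens.


Definition eu (F : fieldType) (m p q : nat) : 'M[F]_m :=
  \matrix_(u, v) ((u == p :> nat) && (v == q :> nat))%:R.

Lemma sum_d1 (F : fieldType) m (s : 'I_m) (f : 'I_m -> F) :
  \sum_(w < m) f w * (w == s :> nat)%:R = f s.
Proof.
rewrite (bigD1 s) //= eqxx mulr1 big1 ?addr0 // => w ws.
by rewrite val_eqE (negbTE ws) mulr0.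
Qed.

Lemma sum_d1' (F : fieldType) m (s : 'I_m) (f : 'I_m -> F) :
  \sum_(w < m) (w == s :> nat)%:R * f w = f s.
Proof. by rewrite -(sum_d1 s f); apply: eq_bigr => w _; rewrite mulrC. Qed.

Lemma euM (F : fieldType) m p (q : 'I_m) u : eu F m p q *m eu F m q u = eu F m p u.
Proof.
apply/matrixP => a b; rewrite !mxE.
rewrite (bigD1 q) //= big1 ?addr0 => [|w wq].
  by rewrite !mxE eqxx andbT /= -natrM mulnb.
by rewrite !mxE val_eqE (negbTE wq) andbF mul0r.
Qed.

Section Phi.
Variables (F : fieldType) (A : falgType F) (r : nat) (n : 'I_r -> nat)
  (phi : forall i : 'I_r, A -> 'M[F]_(n i)).
Hypothesis phiW : wedderburn_iso phi.

Lemma phi_lin i c a b : phi i (c *: a + b) = c *: phi i a + phi i b.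
Proof. by case: phiW. Qed.
Lemma phiM i a b : phi i (a * b) = phi i a *m phi i b.
Proof. by case: phiW. Qed.
Lemma phi1 i : phi i 1 = 1%:M.
Proof. by case: phiW. Qed.
Lemma phi0 i : phi i 0 = 0.
Proof.
have := phi_lin i 1 0 0; rewrite scale1r addr0 scale1r => H.
by have := congr1 (fun z => z - phi i 0) H; rewrite subrr addrK.
Qed.
Lemma phiD i a b : phi i (a + b) = phi i a + phi i b.
Proof. by have := phi_lin i 1 a b; rewrite !scale1r. Qed.
Lemma phiZ i c a : phi i (c *: a) = c *: phi i a.
Proof. by rewrite -[c *: a]addr0 phi_lin phi0 addr0. Qed.
Lemma phi_sum i (I : Type) (s : seq I) (P : pred I) (f : I -> A) :
  phi i (\sum_(k <- s | P k) f k) = \sum_(k <- s | P k) phi i (f k).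
Proof.
elim/big_rec2: _ => [|k x y _ <-]; first exact: phi0.
exact: phiD.
Qed.
Lemma phi_inj a b : (forall i, phi i a = phi i b) -> a = b.
Proof.
move=> H; apply/eqP; rewrite -subr_eq0; apply/eqP.
case: phiW => _ _ _ inj _; apply: inj => i.
by rewrite addrC -scaleN1r phi_lin H scaleN1r addNr.
Qed.
Lemma phi_surj (M : forall i, 'M[F]_(n i)) : exists a, [forall i, phi i a == M i].
Proof.
case: phiW => _ _ _ _ /(_ M) [a Ha]; exists a; apply/forallP => i.
by rewrite Ha.
Qed.

Definition E (i : 'I_r) (p q : nat) : A :=
  xchoose (phi_surj (fun j => (j == i)%:R *: eu F (n j) p q)).

Lemma phiE j i p q : phi j (E i p q) = (j == i)%:R *: eu F (n j) p q.
Proof. by have /forallP/(_ j)/eqP := xchooseP (phi_surj (fun j => (j == i)%:R *: eu F (n j) p q)). Qed.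

Lemma sum_E1 : 1 = \sum_i \sum_(p < n i) E i p p.
Proof.
apply: phi_inj => j; rewrite phi1 phi_sum (bigD1 j) //= [X in _ + X]big1 ?addr0.
  rewrite phi_sum; under eq_bigr do rewrite phiE eqxx scale1r.
  apply/matrixP => a b; rewrite !mxE summxE.
  under eq_bigr do rewrite !mxE.
  rewrite (bigD1 a) //= eqxx big1 ?addr0 => [|w wa].
    by rewrite eq_sym.
  by move: wa; rewrite -val_eqE eq_sym => /negbTE ->.
move=> i ij; rewrite phi_sum big1 // => p _.
by rewrite phiE eq_sym (negbTE ij) scale0r.
Qed.

Lemma E_mulL (i : 'I_r) (s : 'I_(n i)) (p : nat) (a : A) :
  a * E i s p = \sum_(u < n i) phi i a u s *: E i u p.
Proof.
apply: phi_inj => j; rewrite phiM phi_sum phiE.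
case: (eqVneq j i) => [->|ji]; last first.
  rewrite scale0r mulmx0 big1 // => u _.
  by rewrite phiZ phiE (negbTE ji) scale0r scaler0.
rewrite ?eqxx scale1r; under eq_bigr do rewrite phiZ phiE eqxx scale1r.
apply/matrixP => a' b; rewrite !mxE summxE.
under eq_bigr do rewrite !mxE -mulnb natrM mulrA.
under [RHS]eq_bigr do rewrite !mxE -mulnb natrM mulrA [(a' == _ :> nat)]eq_sym.
by rewrite -!mulr_suml !sum_d1.
Qed.

Lemma E_mulR (i : 'I_r) (s : 'I_(n i)) (p : nat) (a : A) :
  E i p s * a = \sum_(u < n i) phi i a s u *: E i p u.
Proof.
apply: phi_inj => j; rewrite phiM phi_sum phiE.
case: (eqVneq j i) => [->|ji]; last first.
  rewrite scale0r mul0mx big1 // => u _.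
  by rewrite phiZ phiE (negbTE ji) scale0r scaler0.
rewrite ?eqxx scale1r; under eq_bigr do rewrite phiZ phiE eqxx scale1r.
apply/matrixP => a' b; rewrite !mxE summxE.
under eq_bigr do rewrite !mxE -mulnb natrM -mulrA.
under [RHS]eq_bigr do rewrite !mxE -mulnb natrM mulrCA [(b == _ :> nat)]eq_sym.
by rewrite -!mulr_sumr sum_d1' sum_d1.
Qed.

Lemma E_EM (i : 'I_r) p (q : 'I_(n i)) u : E i p q * E i q u = E i p u.
Proof.
apply: phi_inj => j; rewrite phiM !phiE.
case: (eqVneq j i) => [->|ji]; last by rewrite !scale0r mul0mx.
by rewrite ?eqxx !scale1r euM.
Qed.
End Phi.


Lemma sum_d1s (K : fieldType) m (s : 'I_m) (f : 'I_m -> K) :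
  \sum_(w < m) f w * (s == w :> nat)%:R = f s.
Proof. by rewrite -(sum_d1 s f); apply: eq_bigr => w _; rewrite eq_sym. Qed.

Section Main.
Variables (F : fieldType) (A : falgType F) (r : nat) (n : 'I_r -> nat)
  (phi : forall i : 'I_r, A -> 'M[F]_(n i)).
Hypothesis phiW : wedderburn_iso phi.
Hypothesis hn : forall i, (0 < n i)%N.
Local Notation E := (E phiW).
Local Notation d := (fdim A).
Local Notation eb k := (tnth (fbasis A) k).

Definition f0 (x : A) : 'M[F]_d :=
  \sum_i \sum_(s < n i) \sum_(p < n i) tp (E i s p) (x * E i p s).

Lemma f0_inv x a : lmx a *m f0 x = f0 x *m rmx a.
Proof.
rewrite /f0 mulmx_sumr mulmx_suml; apply: eq_bigr => i _.
rewrite mulmx_sumr mulmx_suml.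
under eq_bigr => s _ do rewrite mulmx_sumr; under [RHS]eq_bigr => s _ do rewrite mulmx_suml.
under eq_bigr => s _ do under eq_bigr => p _ do rewrite tpL (E_mulL phiW) tp_suml.
under [RHS]eq_bigr => s _ do under eq_bigr => p _ do rewrite tpR -mulrA (E_mulR phiW) mulr_sumr.
under [RHS]eq_bigr => s _ do under eq_bigr => p _ do under eq_bigr => u _ do rewrite -scalerAr.
under [RHS]eq_bigr => s _ do under eq_bigr => p _ do rewrite tp_sumr.
rewrite [LHS](exchange_big_dep xpredT) //=.
under eq_bigr => s _ do rewrite (exchange_big_dep xpredT) //=.
by rewrite [LHS](exchange_big_dep xpredT).
Qed.

Definition o i : 'I_(n i) := Ordinal (hn i).

Definition kap i (p q : 'I_(n i)) (S : 'M[F]_d) : F :=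
  \sum_k \sum_l S k l * (phi i (eb k) (o i) p * phi i (eb l) q (o i)).
Arguments kap : clear implicits.

Lemma EL0 i (a : A) : E i 0 0 * a = \sum_(u < n i) phi i a (o i) u *: E i 0 u.
Proof. exact: (E_mulR phiW (o i) 0 a). Qed.
Lemma ER0 i (a : A) : a * E i 0 0 = \sum_(u < n i) phi i a u (o i) *: E i u 0.
Proof. exact: (E_mulL phiW (o i) 0 a). Qed.

Lemma Mlem i S : lmx (E i 0 0) *m S *m rmx (E i 0 0) =
  \sum_p \sum_q kap i p q S *: tp (E i 0 p) (E i q 0).
Proof.
rewrite {1}(tp_decomp S) mulmx_sumr mulmx_suml.
under eq_bigr => k _ do rewrite mulmx_sumr mulmx_suml.
under eq_bigr => k _ do under eq_bigr => l _ do
  rewrite -scalemxAr -scalemxAl tpL tpR EL0 ER0 tp_suml.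
under eq_bigr => k _ do under eq_bigr => l _ do under eq_bigr => p _ do
  rewrite tp_sumr scaler_sumr.
under eq_bigr => k _ do under eq_bigr => l _ do rewrite scaler_sumr.
rewrite /kap.
under [RHS]eq_bigr => p _ do under eq_bigr => q _ do rewrite !scaler_suml.
under [RHS]eq_bigr => p _ do under eq_bigr => q _ do under eq_bigr => k _ do rewrite !scaler_suml.
under eq_bigr => k _ do under eq_bigr => l _ do under eq_bigr => p _ do
  rewrite scaler_sumr.
under eq_bigr => k _ do rewrite (exchange_big_dep xpredT) //=.
under eq_bigr => k _ do under eq_bigr => p _ do rewrite (exchange_big_dep xpredT) //=.
rewrite (exchange_big_dep xpredT) //=.
under eq_bigr => p _ do rewrite (exchange_big_dep xpredT) //=.
apply: eq_bigr => p _; apply: eq_bigr => q _; apply: eq_bigr => k _; apply: eq_bigr => l _.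
by rewrite !scalerA mulrA.
Qed.
Lemma lmx0 : lmx (0 : A) = 0.
Proof.
have := lmx_lin 1 (0 : A) 0; rewrite scale1r addr0 scale1r => H.
by have := congr1 (fun z => z - lmx 0) H; rewrite subrr addrK.
Qed.
Lemma lmx_sum (I : Type) (s : seq I) (P : pred I) (f : I -> A) :
  lmx (\sum_(k <- s | P k) f k) = \sum_(k <- s | P k) lmx (f k).
Proof.
elim/big_rec2: _ => [|k x y _ <-]; first exact: lmx0.
by have := lmx_lin 1 (f k) y; rewrite !scale1r.
Qed.

Definition xT (T : 'M[F]_d) : A :=
  \sum_i \sum_(p < n i) \sum_(q < n i) kap i p q T *: E i q p.

Lemma phi_xT i T (u p : 'I_(n i)) : phi i (xT T) u p = kap i p u T.
Proof.
rewrite /xT (phi_sum phiW) (bigD1 i) //= [X in _ + X]big1 ?addr0; last first.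
  move=> j ji; rewrite (phi_sum phiW) big1 // => p' _; rewrite (phi_sum phiW) big1 // => q _.
  by rewrite (phiZ phiW) (phiE phiW) eq_sym (negbTE ji) scale0r scaler0.
rewrite (phi_sum phiW) summxE.
under eq_bigr => p' _ do rewrite (phi_sum phiW) summxE.
under eq_bigr => p' _ do under eq_bigr => q _ do rewrite (phiZ phiW) (phiE phiW) eqxx scale1r !mxE -mulnb natrM mulrA.
under eq_bigr => p' _ do rewrite -mulr_suml sum_d1s.
by rewrite sum_d1s.
Qed.

Lemma EM0 i p u : E i p 0 * E i 0 u = E i p u.
Proof. change (E i p (o i) * E i (o i) u = E i p u); exact: E_EM. Qed.

Lemma recon T : (forall a, lmx a *m T = T *m rmx a) -> T = f0 (xT T).
Proof.
move=> Hinv.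
rewrite -[T in LHS]mul1mx -lmx1 (sum_E1 phiW) lmx_sum mulmx_suml /f0.
apply: eq_bigr => i _; rewrite lmx_sum mulmx_suml; apply: eq_bigr => s _.
have -> : lmx (E i s s) *m T =
    lmx (E i s 0) *m (lmx (E i 0 0) *m T *m rmx (E i 0 0)) *m rmx (E i 0 s).
  rewrite !mulmxA -(lmxM (E i s 0)) EM0 -!mulmxA -rmxM EM0.
  by rewrite -[E i s s](EM0 i s s) lmxM -mulmxA Hinv.
rewrite Mlem mulmx_sumr mulmx_suml; apply: eq_bigr => p _.
rewrite (E_mulL phiW p) tp_sumr mulmx_sumr mulmx_suml; apply: eq_bigr => q _.
by rewrite -scalemxAr -scalemxAl tpL tpR !EM0 phi_xT.
Qed.

Lemma phi_entry i (y : A) a b :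
  phi i y a b = \sum_k coord (fbasis A) k y * phi i (eb k) a b.
Proof.
rewrite {1}(expand_e y) (phi_sum phiW) summxE.
by apply: eq_bigr => k _; rewrite (phiZ phiW) mxE.
Qed.

Lemma kap_tp i p q y z : kap i p q (tp y z) = phi i y (o i) p * phi i z q (o i).
Proof.
rewrite /kap !phi_entry mulr_suml; apply: eq_bigr => k _.
rewrite mulr_sumr; apply: eq_bigr => l _.
by rewrite /tp mxE mulrACA.
Qed.

Lemma kapD i p q S S' : kap i p q (S + S') = kap i p q S + kap i p q S'.
Proof.
rewrite /kap -big_split; apply: eq_bigr => k _.
rewrite -big_split; apply: eq_bigr => l _.
by rewrite mxE mulrDl.
Qed.

Lemma kap0 i p q : kap i p q 0 = 0.
Proof.
by rewrite /kap big1 // => k _; rewrite big1 // => l _; rewrite mxE mul0r.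
Qed.

Lemma kap_sum i p q (I : Type) (s : seq I) (P : pred I) (S : I -> 'M[F]_d) :
  kap i p q (\sum_(j <- s | P j) S j) = \sum_(j <- s | P j) kap i p q (S j).
Proof.
elim/big_rec2: _ => [|j x y _ <-]; first exact: kap0.
exact: kapD.
Qed.

Lemma mul_eu m (M : 'M[F]_m) (p' : 'I_m) s a b :
  (M *m eu F m p' s) a b = M a p' * (b == s :> nat)%:R.
Proof.
rewrite mxE; under eq_bigr => w _ do rewrite mxE -mulnb natrM mulrA.
by rewrite -mulr_suml sum_d1.
Qed.

Lemma sum_dX (K : fieldType) m (s : 'I_m) (f : 'I_m -> K) :
  \sum_(w < m) (s == w :> nat)%:R * f w = f s.
Proof. by rewrite -(sum_d1' s f); apply: eq_bigr => w _; rewrite eq_sym. Qed.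

Lemma boolfact (b1 b2 : bool) (c : F) :
  (b1 && b2)%:R * (c * b1%:R) = b1%:R * (b2%:R * c).
Proof. by case: b1; case: b2; rewrite /= ?mul0r ?mulr0 ?mul1r ?mulr1. Qed.

Lemma kap_f0 i p q x : kap i p q (f0 x) = phi i x q p.
Proof.
rewrite /f0 kap_sum (bigD1 i) //= [X in _ + X]big1 ?addr0; last first.
  move=> j ji; rewrite kap_sum big1 // => s _; rewrite kap_sum big1 // => p' _.
  by rewrite kap_tp (phiE phiW) eq_sym (negbTE ji) scale0r mxE mul0r.
rewrite kap_sum.
under eq_bigr => s _ do rewrite kap_sum.
under eq_bigr => s _ do under eq_bigr => p' _ do
  rewrite kap_tp (phiE phiW) eqxx scale1r (phiM phiW) (phiE phiW) eqxx scale1r mul_eu mxE boolfact.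
under eq_bigr => s _ do rewrite -mulr_sumr.
by rewrite sum_dX sum_dX.
Qed.

Lemma f0_inj x : f0 x = 0 -> x = 0.
Proof.
move=> H; apply: (phi_inj phiW) => i; apply/matrixP => q p.
by rewrite -kap_f0 H kap0 (phi0 phiW) mxE.
Qed.
End Main.


Lemma linfunE' (K : fieldType) (aT rT : vectType K) (f : aT -> rT)
  (Hf : linear f) x : linfun f x = f x.
Proof.
pose flM := GRing.isLinear.Build _ _ _ _ f Hf.
pose fL : {linear _ -> _} := HB.pack f flM.
exact: (lfunE fL x).
Qed.

Lemma tp_linr (F : fieldType) (A : falgType F) (x : A) c y z :
  tp x (c *: y + z) = c *: tp x y + tp x z.
Proof.
apply/matrixP => k l; rewrite !mxE linearP /=.
by rewrite mulrDr mulrCA.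
Qed.

Section Dim.
Variables (F : fieldType) (A : falgType F) (r : nat) (n : 'I_r -> nat)
  (phi : forall i : 'I_r, A -> 'M[F]_(n i)).
Hypothesis phiW : wedderburn_iso phi.

Definition Ix := {i : 'I_r & ('I_(n i) * 'I_(n i))%type}.

Definition psi_f (a : A) : {ffun Ix -> F^o} :=
  [ffun t => phi (tag t) a (tagged t).1 (tagged t).2].

Lemma psi_lin : linear psi_f.
Proof.
move=> c a b; apply/ffunP => t; rewrite !ffunE (phi_lin phiW) !mxE.
by [].
Qed.

Lemma dimA : \dim (fullv : {vspace A}) = (\sum_(i < r) n i ^ 2)%N.
Proof.
pose psi : 'Hom(A, {ffun Ix -> F^o}) := linfun psi_f.
have psiE a : psi a = psi_f a by rewrite linfunE' //; exact: psi_lin.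
have ker0 : (fullv :&: lker psi = 0)%VS.
  have /eqP -> : lker psi == 0%VS.
    apply/lker0P => a b Hab; apply: (phi_inj phiW) => i.
    apply/matrixP => p q.
    move: Hab; rewrite !psiE => /ffunP/(_ (Tagged (fun i => ('I_(n i) * 'I_(n i))%type) (p, q))).
    by rewrite !ffunE.
  exact: capv0.
rewrite -(limg_dim_eq ker0).
have -> : (psi @: fullv = fullv)%VS.
  apply/eqP; rewrite eqEsubv subvf /=; apply/subvP => g _.
  pose M i := \matrix_(p < n i, q < n i) (g (Tagged (fun i => ('I_(n i) * 'I_(n i))%type) (p, q)) : F).
  have [a /forallP Ha] := phi_surj phiW M.
  apply/memv_imgP; exists a; first exact: memvf.
  apply/ffunP => -[i [p q]]; rewrite psiE ffunE /=.
  by rewrite (eqP (Ha i)) mxE.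
rewrite dimvf /dim /= muln1 card_tagged sumnE big_map big_enum /=.
by apply: eq_bigr => i _; rewrite card_prod card_ord mulnn.
Qed.
End Dim.


Lemma lmxT_lin (F : fieldType) (A : falgType F) (T : tens A) : linear (fun a : A => lmx a *m T).
Proof. by move=> c a b; rewrite /= lmx_lin mulmxDl scalemxAl. Qed.

Unset Implicit Arguments.
Theorem corollary9 (F : closedFieldType) (A : falgType F) (r : nat)
    (n : 'I_r -> nat) :
  semisimple A ->
  (forall i, (0 < n i)%N) ->
  (exists phi : (forall i : 'I_r, A -> 'M[F]_(n i)), wedderburn_iso phi) ->
  exists V : {vspace 'Hom(A, tens A)},
    (forall D : 'Hom(A, tens A), D \in V <-> nearly_frobenius D) /\
    \dim V = (\sum_(i < r) n i ^ 2)%N.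
Proof.
move=> _ hn [phi phiW].
pose F0 := f0 phiW.
have f0_lin : linear F0.
  move=> c x y; rewrite /F0 /f0 scaler_sumr -big_split; apply: eq_bigr => i _.
  rewrite scaler_sumr -big_split; apply: eq_bigr => s _.
  rewrite scaler_sumr -big_split; apply: eq_bigr => p _.
  by rewrite mulrDl -scalerAl tp_linr.
pose g x : 'Hom(A, tens A) := linfun (fun a => lmx a *m F0 x).
have gE x a : g x a = lmx a *m F0 x by rewrite linfunE' //; exact: lmxT_lin.
have g_lin : linear g.
  move=> c x y; apply/lfunP => a; rewrite add_lfunE scale_lfunE !gE.
  by rewrite f0_lin mulmxDr scalemxAr.
pose G : 'Hom(A, 'Hom(A, tens A)) := linfun g.
have GE x : G x = g x by rewrite linfunE'.
exists (limg G); split.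
  move=> D; split.
    move/memv_imgP => [x _ ->]; rewrite GE => a b; rewrite !gE lmxM -mulmxA.
    by split => //; rewrite (f0_inv phiW) mulmxA.
  move=> ND; apply/memv_imgP; exists (xT phiW hn (D 1)); first exact: memvf.
  have Hinv a : lmx a *m D 1 = D 1 *m rmx a.
    by rewrite -(ND a 1).1 mulr1 -[a in LHS]mul1r (ND 1 a).2.
  rewrite GE; apply/lfunP => a; rewrite gE /F0 -(recon phiW hn Hinv).
  by rewrite -(ND a 1).1 mulr1.
have ker0 : (fullv :&: lker G = 0)%VS.
  have /eqP -> : lker G == 0%VS.
    apply/lker0P => x y Hxy.
    have : F0 x = F0 y.
      move: Hxy; rewrite !GE => /lfunP/(_ 1); rewrite !gE.
      by rewrite lmx1 !mul1mx.
    move=> H; apply/eqP; rewrite -subr_eq0; apply/eqP; apply: (f0_inj (phiW:=phiW) hn).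
    have := f0_lin (-1) y x; rewrite !scaleN1r [- y + x]addrC H addNr.
    by [].
  exact: capv0.
by rewrite (limg_dim_eq ker0) (dimA phiW).
Qed.
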